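(* Let $A,B\in\mathscr{B}(\Omega)$ with $\underline{P}(B)>0$ and $\underline{P}(B^c)>0$, and let $\mathcal{B}=\{B,B^c\}$. If $\mathcal{B}$ dilates $A$ under the Geometric rule, then it contracts $A$ under Dempster's rule. Similarly, if $\mathcal{B}$ dilates $A$ under Dempster's rule, then it contracts $A$ under the Geometric rule. In both cases, the contraction is strict if the corresponding dilation is strict.
   Context: $\Omega$ is a separable, completely metrizable space with Borel $\sigma$-algebra $\mathscr{B}(\Omega)$; $\underline{P}$ is a Choquet capacity of order 2 on $\mathscr{B}(\Omega)$ (a coherent lower probability with weakly compact set of dominating measures satisfying $\underline{P}(A\cup B)\ge\underline{P}(A)+\underline{P}(B)-\underline{P}(A\cap B)$ for all $A,B$); $\Pi=\{P:P\ge\underline{P}\}$, $\underline{P}(A)=\inf_{P\in\Pi}P(A)$, $\overline{P}(A)=\sup_{P\in\Pi}P(A)=1-\underline{P}(A^c)$. Dempster's rule: $\overline{P}_{\mathfrak{D}}(A\mid Z)=\overline{P}(A\cap Z)/\overline{P}(Z)$, $\underline{P}_{\mathfrak{D}}(A\mid Z)=1-\overline{P}_{\mathfrak{D}}(A^c\mid Z)$. Geometric rule: $\underline{P}_{\mathfrak{G}}(A\mid Z)=\underline{P}(A\cap Z)/\underline{P}(Z)$, $\overline{P}_{\mathfrak{G}}(A\mid Z)=1-\underline{P}_{\mathfrak{G}}(A^c\mid Z)$. For a rule with conditional lower/upper probabilities $\underline{P}_\bullet,\overline{P}_\bullet$: $\mathcal{B}$ strictly dilates $A$ if $\sup_{Z\in\mathcal{B}}\underline{P}_\bullet(A\mid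 Z)<\underline{P}(A)\le\overline{P}(A)<\inf_{Z\in\mathcal{B}}\overline{P}_\bullet(A\mid Z)$, and dilates $A$ if this holds with either (but not both) outer strict inequality allowed to be an equality; $\mathcal{B}$ strictly contracts $A$ if $\underline{P}(A)<\inf_{Z\in\mathcal{B}}\underline{P}_\bullet(A\mid Z)\le\sup_{Z\in\mathcal{B}}\overline{P}_\bullet(A\mid Z)<\overline{P}(A)$, and contracts $A$ if this holds with either (but not both) outer strict inequality allowed to be an equality. *)

(* Defs.v *)
From HB Require Import structures.
From mathcomp Require Import all_boot all_order all_algebra.
From mathcomp Require Import all_classical all_reals all_analysis.
Set Implicit Arguments. Unset Strict Implicit. Unset Printing Implicit Defensive.
Import Order.TTheory GRing.Theory Num.Theory.
Import numFieldNormedType.Exports.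
Local Open Scope classical_set_scope.
Local Open Scope ring_scope.

Definition separable_space (T : ptopologicalType) : Prop :=
  exists D : set T, countable D /\ closure D = setT.

Definition completely_metrizable (R : realType) (T : ptopologicalType) : Prop :=
  exists d : T -> T -> R,
    (forall x y, 0 <= d x y) /\
    (forall x y, d x y = 0 <-> x = y) /\
    (forall x y, d x y = d y x) /\
    (forall x y z, d x z <= d x y + d y z) /\
        (forall (x : T) (U : set T),
            nbhs x U <-> exists e : R, 0 < e /\ [set y | d x y < e] `<=` U) /\
        (forall u : nat -> T,
            (forall e : R, 0 < e -> exists N : nat, forall m n : nat,
                 (N <= m)%N -> (N <= n)%N -> d (u m) (u n) < e) ->
            exists x : T, u @ \oo --> x).

Definition borel (T : ptopologicalType) : measurableType (@open T).-sigma :=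
  g_sigma_algebraType (@open T).

Definition bounded_continuous (R : realType) (T : ptopologicalType)
  (f : T -> R) : Prop :=
  continuous f /\ exists M : R, forall x, `|f x| <= M.

(* A set of Borel probability measures is weakly compact: compact in the
   topology of weak convergence (the initial topology of the maps
   Q |-> \int f dQ, f bounded continuous); stated through the ultrafilter
   characterization of compactness (every ultrafilter containing the set
   converges to one of its points), where convergence in the initial
   topology means convergence of every coordinate map. *)
Definition weakly_compact (R : realType) (T : ptopologicalType)
  (Pi : set (probability (borel T) R)) : Prop :=
  forall F : set_system (probability (borel T) R),
    UltraFilter F -> F Pi ->
    exists2 P, Pi P &
      forall f : T -> R, bounded_continuous f ->
        (fun Q : probability (borel T) R => (\int[Q]_x (f x)%:E)%E) @ F
          --> (\int[P]_x (f x)%:E)%E.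

Definition core (R : realType) (T : ptopologicalType) (lP : set T -> R) :
  set (probability (borel T) R) :=
  [set P | forall A : set (borel T), measurable A -> (lP A)%:E <= P A]%E.

(* lP is a Choquet capacity of order 2 on B(Omega): a coherent lower
   probability (lower envelope of its core) whose core is weakly compact
   and which is 2-monotone. *)
Definition capacity2 (R : realType) (T : ptopologicalType) (lP : set T -> R)
  : Prop :=
  [/\ (forall A : set (borel T), measurable A ->
         (lP A)%:E = ereal_inf [set P A | P in core lP]),
      weakly_compact (core lP) &
      (forall A B : set (borel T), measurable A -> measurable B ->
         lP A + lP B - lP (A `&` B) <= lP (A `|` B))].

Definition upperP (R : realType) (T : Type) (lP : set T -> R) (A : set T) : R :=
  1 - lP (~` A).

(* An updating rule gives conditional lower and upper probabilities
   (first argument: event A, second: conditioning event Z). *)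
Record rule (R : realType) (T : Type) := Rule {
  lcond : set T -> set T -> R;
  ucond : set T -> set T -> R }.

Definition dempster_rule (R : realType) (T : Type) (lP : set T -> R) : rule R T :=
  let uD := fun A Z => upperP lP (A `&` Z) / upperP lP Z in
  Rule (fun A Z => 1 - uD (~` A) Z) uD.

Definition geometric_rule (R : realType) (T : Type) (lP : set T -> R) : rule R T :=
  let lG := fun A Z => lP (A `&` Z) / lP Z in
  Rule lG (fun A Z => 1 - lG (~` A) Z).

Definition sup_cond (R : realType) (T : Type) (c : set T -> set T -> R)
  (A : set T) (BB : set (set T)) : R := sup [set c A Z | Z in BB].
Definition inf_cond (R : realType) (T : Type) (c : set T -> set T -> R)
  (A : set T) (BB : set (set T)) : R := inf [set c A Z | Z in BB].

Definition strictly_dilates (R : realType) (T : Type) (lP : set T -> R)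
  (r : rule R T) (BB : set (set T)) (A : set T) : Prop :=
  [/\ sup_cond (lcond r) A BB < lP A, lP A <= upperP lP A &
      upperP lP A < inf_cond (ucond r) A BB].

Definition dilates (R : realType) (T : Type) (lP : set T -> R)
  (r : rule R T) (BB : set (set T)) (A : set T) : Prop :=
  ([/\ sup_cond (lcond r) A BB < lP A, lP A <= upperP lP A &
       upperP lP A <= inf_cond (ucond r) A BB] \/
   [/\ sup_cond (lcond r) A BB <= lP A, lP A <= upperP lP A &
       upperP lP A < inf_cond (ucond r) A BB]).

Definition strictly_contracts (R : realType) (T : Type) (lP : set T -> R)
  (r : rule R T) (BB : set (set T)) (A : set T) : Prop :=
  [/\ lP A < inf_cond (lcond r) A BB,
      inf_cond (lcond r) A BB <= sup_cond (ucond r) A BB &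
      sup_cond (ucond r) A BB < upperP lP A].

Definition contracts (R : realType) (T : Type) (lP : set T -> R)
  (r : rule R T) (BB : set (set T)) (A : set T) : Prop :=
  ([/\ lP A < inf_cond (lcond r) A BB,
       inf_cond (lcond r) A BB <= sup_cond (ucond r) A BB &
       sup_cond (ucond r) A BB <= upperP lP A] \/
   [/\ lP A <= inf_cond (lcond r) A BB,
       inf_cond (lcond r) A BB <= sup_cond (ucond r) A BB &
       sup_cond (ucond r) A BB < upperP lP A]).

(* Main.v *)
Require Import Defs.
From mathcomp Require Import all_boot all_order all_algebra.
From mathcomp Require Import all_classical all_reals all_analysis.
From mathcomp Require Import lra.
Import Order.TTheory GRing.Theory Num.Theory.
Local Open Scope classical_set_scope.
Local Open Scope ring_scope.

Lemma img2 {R : realType} {T : Type} (f : set T -> R) (X Y : set T) :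
  [set f Z | Z in [set X; Y]] = [set f X; f Y].
Proof.
apply/seteqP; split => x /=.
- by case=> Z [->|->] <-; [left|right].
- by case=> ->; [exists X; [left|] | exists Y; [right|]].
Qed.

Lemma sup2 {R : realType} (a b : R) : sup [set a; b] = Num.max a b.
Proof.
apply/le_anti/andP; split.
- apply: ge_sup; first by exists a; left.
  by move=> x [->|->]; rewrite ?le_max lexx ?orbT.
- have hl : has_ubound [set a; b].
    by exists (Num.max a b) => x [->|->]; rewrite le_max lexx ?orbT.
  by rewrite ge_max; apply/andP; split; apply: ub_le_sup => //; [left|right].
Qed.

Lemma inf2 {R : realType} (a b : R) : inf [set a; b] = Num.min a b.
Proof.
apply/le_anti/andP; split.
- have hl : has_lbound [set a; b].
    by exists (Num.min a b) => x [->|->]; rewrite ge_min lexx ?orbT.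
  by rewrite le_min; apply/andP; split; apply: ge_inf => //; [left|right].
- apply: (@lb_le_inf _ _ (Num.min a b)); first by exists a; left.
  by move=> x [->|->]; rewrite ?ge_min lexx ?orbT.
Qed.
Lemma core_ineq {R : realType} (p q r s : R) : 0 < q -> q < 1 -> p + q - r <= s ->
 [/\ r/q <= p -> p <= 1 - (1-s)/(1-q),
     r/q < p -> p < 1 - (1-s)/(1-q),
     1 - (1-s)/(1-q) <= p -> p <= r/q &
     1 - (1-s)/(1-q) < p -> p < r/q ].
Proof.
move=> q0 q1 h2.
have q1' : 0 < 1 - q by lra.
set G := r/q; set t := (1-s)/(1-q).
have hr : r = G * q by rewrite /G divfK // gt_eqF.
have hs : 1 - s = t * (1 - q) by rewrite /t divfK // gt_eqF.
split=> h; nra.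
Qed.
Lemma cap_facts (R : realType) (T : ptopologicalType) (lP : set T -> R) :
  capacity2 lP -> lP set0 <= 0 /\ lP setT <= 1.
Proof.
case=> coh _ _.
have [P PC] : core lP !=set0.
  apply/set0P/negP => /eqP C0.
  have := coh setT measurableT; rewrite C0 image_set0 ereal_inf0 => //.
have h0 := coh set0 measurable0; have hT := coh setT measurableT.
split.
- rewrite -lee_fin h0; apply: ereal_inf_lbound; exists P => //; exact: measure0.
- rewrite -lee_fin hT; apply: ereal_inf_lbound; exists P => //; exact: probability_setT.
Qed.
Ltac clri := repeat match goal with H : _ -> _ |- _ => clear H end.
Ltac fin := match goal with H : _ -> _ |- _ => have hh := H ltac:(clri; lra); clri; lra end.

Lemma final {R : realType} (a c G1 G2 H1 H2 d1 d2 e1 e2 : R) :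
  (G1 <= a -> a <= 1 - d1) -> (G1 < a -> a < 1 - d1) ->
  (1 - d1 <= a -> a <= G1) -> (1 - d1 < a -> a < G1) ->
  (G2 <= a -> a <= 1 - d2) -> (G2 < a -> a < 1 - d2) ->
  (1 - d2 <= a -> a <= G2) -> (1 - d2 < a -> a < G2) ->
  (H1 <= c -> c <= 1 - e1) -> (H1 < c -> c < 1 - e1) ->
  (1 - e1 <= c -> c <= H1) -> (1 - e1 < c -> c < H1) ->
  (H2 <= c -> c <= 1 - e2) -> (H2 < c -> c < 1 - e2) ->
  (1 - e2 <= c -> c <= H2) -> (1 - e2 < c -> c < H2) ->
  G1 <= 1 - H1 -> 1 - d2 <= e2 ->
  (([/\ Num.max G1 G2 < a, a <= 1 - c & 1 - c <= Num.min (1 - H1) (1 - H2)] \/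
    [/\ Num.max G1 G2 <= a, a <= 1 - c & 1 - c < Num.min (1 - H1) (1 - H2)]) ->
   [/\ a < Num.min (1 - d2) (1 - d1), Num.min (1 - d2) (1 - d1) <= Num.max e2 e1
     & Num.max e2 e1 <= 1 - c] \/
   [/\ a <= Num.min (1 - d2) (1 - d1), Num.min (1 - d2) (1 - d1) <= Num.max e2 e1
     & Num.max e2 e1 < 1 - c]) /\
  ([/\ Num.max G1 G2 < a, a <= 1 - c & 1 - c < Num.min (1 - H1) (1 - H2)] ->
   [/\ a < Num.min (1 - d2) (1 - d1), Num.min (1 - d2) (1 - d1) <= Num.max e2 e1
     & Num.max e2 e1 < 1 - c]) /\
  (([/\ Num.max (1 - d2) (1 - d1) < a, a <= 1 - c & 1 - c <= Num.min e2 e1] \/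
    [/\ Num.max (1 - d2) (1 - d1) <= a, a <= 1 - c & 1 - c < Num.min e2 e1]) ->
   [/\ a < Num.min G1 G2, Num.min G1 G2 <= Num.max (1 - H1) (1 - H2)
     & Num.max (1 - H1) (1 - H2) <= 1 - c] \/
   [/\ a <= Num.min G1 G2, Num.min G1 G2 <= Num.max (1 - H1) (1 - H2)
     & Num.max (1 - H1) (1 - H2) < 1 - c]) /\
  ([/\ Num.max (1 - d2) (1 - d1) < a, a <= 1 - c & 1 - c < Num.min e2 e1] ->
   [/\ a < Num.min G1 G2, Num.min G1 G2 <= Num.max (1 - H1) (1 - H2)
     & Num.max (1 - H1) (1 - H2) < 1 - c]).
Proof.
move=> i1 i2 i3 i4 j1 j2 j3 j4 k1 k2 k3 k4 l1 l2 l3 l4 gm dm.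
have m1 : Num.min (1 - d2) (1 - d1) <= Num.max e2 e1.
  by rewrite ge_min le_max dm.
have m2 : Num.min G1 G2 <= Num.max (1 - H1) (1 - H2).
  by rewrite ge_min le_max gm.
split; [|split; [|split]].
- case=> -[h1 _ h3]; move: h1 h3; rewrite ?gt_max ?ge_max ?le_min ?lt_min => /andP[h1 h2] /andP[h3 h4];
  [left|right]; split; rewrite ?lt_min ?le_min ?ge_max ?gt_max ?m1 ?m2 //; apply/andP; split; fin.
- case=> h1 _ h3; move: h1 h3; rewrite ?gt_max ?ge_max ?le_min ?lt_min => /andP[h1 h2] /andP[h3 h4];
  split; rewrite ?lt_min ?le_min ?ge_max ?gt_max ?m1 ?m2 //; apply/andP; split; fin.
- case=> -[h1 _ h3]; move: h1 h3; rewrite ?gt_max ?ge_max ?le_min ?lt_min => /andP[h1 h2] /andP[h3 h4];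
  [left|right]; split; rewrite ?lt_min ?le_min ?ge_max ?gt_max ?m1 ?m2 //; apply/andP; split; fin.
- case=> h1 _ h3; move: h1 h3; rewrite ?gt_max ?ge_max ?le_min ?lt_min => /andP[h1 h2] /andP[h3 h4];
  split; rewrite ?lt_min ?le_min ?ge_max ?gt_max ?m1 ?m2 //; apply/andP; split; fin.
Qed.

Theorem theorem5p9 (R : realType) (T : ptopologicalType)
  (hsep : separable_space T) (hcm : completely_metrizable R T)
  (lP : set T -> R) (hcap : capacity2 lP)
  (A B : set (borel T)) (mA : measurable A) (mB : measurable B)
  (hB : 0 < lP B) (hBc : 0 < lP (~` B)) :
  let BB := [set B; ~` B] in
  (dilates lP (geometric_rule lP) BB A -> contracts lP (dempster_rule lP) BB A) /\
  (strictly_dilates lP (geometric_rule lP) BB A ->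
     strictly_contracts lP (dempster_rule lP) BB A) /\
  (dilates lP (dempster_rule lP) BB A -> contracts lP (geometric_rule lP) BB A) /\
  (strictly_dilates lP (dempster_rule lP) BB A ->
     strictly_contracts lP (geometric_rule lP) BB A).
Proof.
move=> BB.
have [L0 L1] := cap_facts _ _ _ hcap.
have mon : forall X Y : set (borel T), measurable X -> measurable Y ->
    lP X + lP Y - lP (X `&` Y) <= lP (X `|` Y).
  by case: hcap.
have mAc : measurable (~` A) by exact: measurableC.
have mBc : measurable (~` B) by exact: measurableC.
have hbc : lP B + lP (~` B) <= 1.
  have := mon _ _ mB mBc; rewrite setICr setUCr; lra.
have gmid : lP (A `&` B) / lP B <= 1 - lP (~` A `&` B) / lP B.
  have := mon _ _ (measurableI _ _ mA mB) (measurableI _ _ mAc mB).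
  have -> : (A `&` B) `&` (~` A `&` B) = set0.
    by apply/seteqP; split => x //= [[? ?] [? ?]].
  have -> : (A `&` B) `|` (~` A `&` B) = B.
    apply/seteqP; split => x /=; first by case=> -[].
    by move=> Bx; have [?|?] := pselect (A x); [left|right].
  move=> h.
  have e1 := divfK (lt0r_neq0 hB) (lP (A `&` B)).
  have e2 := divfK (lt0r_neq0 hB) (lP (~` A `&` B)).
  rewrite -(ler_pM2r hB) mulrBl mul1r e1 e2.
  move: h L0; clear; lra.
have dmid : 1 - (1 - lP (A `|` ~` B)) / (1 - lP (~` B)) <=
            (1 - lP (~` A `|` ~` B)) / (1 - lP (~` B)).
  have hu : 0 < 1 - lP (~` B) by lra.
  have := mon _ _ (measurableU _ _ mA mBc) (measurableU _ _ mAc mBc).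
  have -> : (A `|` ~` B) `&` (~` A `|` ~` B) = ~` B.
    apply/seteqP; split => x /=; last by move=> ?; split; right.
    by case=> -[?|?] // [?|?].
  have -> : (A `|` ~` B) `|` (~` A `|` ~` B) = setT.
    apply/seteqP; split => x // _ /=.
    by have [?|?] := pselect (A x); [left; left|right; left].
  move=> h.
  have e1 := divfK (lt0r_neq0 hu) (1 - lP (A `|` ~` B)).
  have e2 := divfK (lt0r_neq0 hu) (1 - lP (~` A `|` ~` B)).
  rewrite -(ler_pM2r hu) mulrBl mul1r e1 e2.
  move: h L1; clear; lra.
have [i1 i2 i3 i4] := @core_ineq _ _ _ _ _ hB ltac:(lra) (mon _ _ mA mB).
have [j1 j2 j3 j4] := @core_ineq _ _ _ _ _ hBc ltac:(lra) (mon _ _ mA mBc).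
have [k1 k2 k3 k4] := @core_ineq _ _ _ _ _ hB ltac:(lra) (mon _ _ mAc mB).
have [l1 l2 l3 l4] := @core_ineq _ _ _ _ _ hBc ltac:(lra) (mon _ _ mAc mBc).
rewrite /dilates /strictly_dilates /contracts /strictly_contracts
  /sup_cond /inf_cond /BB !img2 !sup2 !inf2 /= /upperP.
rewrite !setCI !setCK.
exact: (@final _ _ _ _ _ _ _ _ _ _ _ i1 i2 i3 i4 j1 j2 j3 j4 k1 k2 k3 k4 l1 l2 l3 l4 gmid dmid).
Qed.
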